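(* Consider the static single-object erasure-coded Byzantine read/write protocol described in the context over a set $C$ of flexnodes, at most $b<\frac{|C|-k}{3}$ of which are Byzantine, and suppose at most $\delta$ write operations are concurrent with any read. In any execution, if $\omega$ is a complete write and $\rho$ a complete read such that $\omega$ completes before $\rho$ is invoked, and $\omega$ executes put-data$(\langle t_\omega,v_\omega\rangle)$ on $C$, then $\rho$ returns a value associated with a tag $t_\rho\ge t_\omega$.
   Context: Model. $C$ is a fixed finite set of processes (''flexnodes'') over asynchronous reliable channels. Up to $b$ flexnodes may be Byzantine. Processes invoking reads/writes follow the protocol but may crash. Signatures are unforgeable. An $[n,k]$ RLNC code with $n=|C|$: $\mathrm{Encode}(v)$ produces $|C|$ coded elements, any $k$ of which (from the same encoding) recover $v$. Tags are pairs $(z,w)$, $z\in\mathbb{N}$, $w$ a writer identifier, ordered lexicographically. A parameter $\delta\ge1$ is fixed. A quorum is any subset of $C$ of size $\lceil (2|C|+k)/3\rceil$. State. Each flexnode keeps a set $List$ of signed triples $(\langle t,e\rangle,\sigma)$, initially holding the initial pair with tag $t_0$. Primitives (by flexnode $p$): get-tag: query all, each replies with its signed max-tag entry, wait for replies from a quorum, return the maximum verified tag. put-data$(\langle t,v\rangle)$: encode $v$ into $e_1,\dots,e_{|C|}$, send $\langle t,e_j\rangle$ signed by $p$ to the $j$-th flexnode; a receiver adds it to $List$ if the signature verifies and no entry with tag $t$ exists, then if $|List|>\delta+1$ removes the entries with minimum tag, and acknowledges; $p$ waits for a quorum of acknowledgements. get-data: query all, each replies with its $List$, wait for a quorum, keep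 verified pairs, take the maximum tag appearing in at least $k$ received lists, decode and return it with its tag; if none exists the primitive does not complete. Operations: read = get-data returning $\langle t,v\rangle$, then put-data$(\langle t,v\rangle)$, then return $\langle t,v\rangle$; write$(v)$ by $w$ = get-tag returning $t$, then put-data$(\langle (t.z+1,w),v\rangle)$. *)

(* Defs.v *)
From mathcomp Require Import all_boot.

Set Implicit Arguments.
Unset Strict Implicit.
Unset Printing Implicit Defensive.

(* Tags: pairs (z, w), z a natural number, w a writer identifier (nat),
   ordered lexicographically.                                          *)
Definition Tag := (nat * nat)%type.

Definition tle (a b : Tag) : bool :=
  (a.1 < b.1) || ((a.1 == b.1) && (a.2 <= b.2)).

Definition tmax (a b : Tag) : Tag := if tle a b then b else a.

(* the initial tag t0 (strictly below every tag produced by a write) *)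
Definition t0 : Tag := (0, 0).

(* Clients (processes invoking operations) are identified by nat;
   the identifier of a writer is its client identifier.
   ERespW records (as an annotation) the tag used by the write's put-data. *)
Inductive Event (V : Type) :=
| EInvW  (c : nat) (v : V)
| ERespW (c : nat) (t : Tag)
| EInvR  (c : nat)
| ERespR (c : nat) (t : Tag) (v : V).

Arguments EInvR {V} c.
Arguments ERespW {V} c t.
Arguments EInvW {V} c v.
Arguments ERespR {V} c t v.

Definition ev_client V (e : Event V) : nat :=
  match e with EInvW c _ | ERespW c _ | EInvR c | ERespR c _ _ => c end.

Definition is_resp V (e : Event V) : bool :=
  match e with ERespW _ _ | ERespR _ _ _ => true | _ => false end.

Definition is_winv V (e : Event V) : bool :=
  if e is EInvW _ _ then true else false.

Definition is_rinv V (e : Event V) : bool :=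
  if e is EInvR _ then true else false.

Definition evt V (h : seq (Event V)) (i : nat) : Event V := nth (EInvR 0) h i.

Definition done_before V (h : seq (Event V)) (i x : nat) : bool :=
  has (fun j => is_resp (evt h j) && (ev_client (evt h j) == ev_client (evt h i)))
      (iota i.+1 (x - i.+1)).

Definition concurrent V (h : seq (Event V)) (i1 i2 : nat) : bool :=
  ~~ done_before h i1 i2 && ~~ done_before h i2 i1.

Definition write_concurrency_le V (delta : nat) (h : seq (Event V)) : Prop :=
  forall ir, ir < size h -> is_rinv (evt h ir) ->
    count (fun iw => is_winv (evt h iw) && concurrent h iw ir) (iota 0 (size h))
      <= delta.

Section Protocol.

Variable S : finType.          (* the set C of flexnodes *)
Variable B : {set S}.
Variable k : nat.              (* code dimension of the [n,k] code, n = #|S| *)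
Variable delta : nat.
Variable V E : eqType.         (* values, coded elements *)
Variable enc : V -> 'I_#|S| -> E.
Variable dec : seq E -> V.
Variable v0 : V.

(* quorum size ceil((2|C| + k)/3) *)
Definition qsize : nat := (2 * #|S| + k + 2) %/ 3.

(* the j-th flexnode is enum_rank s *)
Definition frag (v : V) (s : S) : E := enc v (enum_rank s).

(* signed triples (<t, e>, sigma); the signature is idealised as the
   identity of the signer (None = the signer of the initial pair).  A
   triple verifies iff it has actually been signed (unforgeability). *)
Definition SEntry := (Tag * E * option nat)%type.
Definition se_tag (x : SEntry) : Tag := x.1.1.
Definition se_elem (x : SEntry) : E := x.1.2.

Inductive SMsg :=
| QTag  (rid : nat)
| QData (rid : nat)
| Put   (rid : nat) (x : SEntry).

Inductive CMsg :=
| RTag  (rid : nat) (x : SEntry)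
| RData (rid : nat) (L : seq SEntry)
| Ack   (rid : nat).

Inductive NetMsg :=
| ToServer (c : nat) (s : S) (m : SMsg)
| ToClient (s : S) (c : nat) (m : CMsg).

(* local state of a client (one operation at a time) *)
Inductive CState :=
| Idle
| WTag (rid : nat) (v : V) (R : S -> option (option Tag))
       (* write, get-tag phase; R s = Some o : s replied, o its verified tag *)
| WPut (rid : nat) (t : Tag) (A : {set S})
       (* write, put-data phase; A = flexnodes that acknowledged *)
| RGet (rid : nat) (R : S -> option (seq SEntry))
       (* read, get-data phase; R s = Some L : s replied, L its verified pairs *)
| RPut (rid : nat) (t : Tag) (v : V) (A : {set S}).

Record State := mkState {
  lists  : S -> seq SEntry;   (* the List of every (correct) flexnode *)
  net    : seq NetMsg;
  cl     : nat -> CState;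
  signed : seq SEntry;        (* all triples signed so far *)
  hist   : seq (Event V);
  ctr    : nat                (* source of fresh request identifiers *)
}.

Definition maxentry (L : seq SEntry) : option SEntry :=
  foldr (fun x acc => match acc with
                      | None => Some x
                      | Some y => if tle (se_tag y) (se_tag x) then Some x else Some y
                      end) None L.

Definition gc (L : seq SEntry) : seq SEntry :=
  if delta.+1 < size L then
    [seq x <- L | ~~ all (fun y => tle (se_tag x) (se_tag y)) L]
  else L.

Definition server_step (sg : seq SEntry) (L : seq SEntry) (s : S) (c : nat)
    (m : SMsg) : seq SEntry * seq NetMsg :=
  match m with
  | QTag rid => (L, if maxentry L is Some x then [:: ToClient s c (RTag rid x)] else [::])
  | QData rid => (L, [:: ToClient s c (RData rid L)])
  | Put rid x =>
      let L' := if (x \in sg) && all (fun y => se_tag y != se_tag x) L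
                then gc (x :: L) else L in
      (L', [:: ToClient s c (Ack rid)])
  end.

Definition upd (T : Type) (f : S -> T) (s : S) (y : T) : S -> T :=
  fun s' => if s' == s then y else f s'.

Definition client_recv (sg : seq SEntry) (cs : CState) (s : S) (m : CMsg) : CState :=
  match cs, m with
  | WTag rid v R, RTag rid' x =>
      if (rid' == rid) && (R s == None) then
        WTag rid v (upd R s (Some (if x \in sg then Some (se_tag x) else None)))
      else cs
  | WPut rid t A, Ack rid' => if rid' == rid then WPut rid t (s |: A) else cs
  | RGet rid R, RData rid' L =>
      if (rid' == rid) && (R s == None) then
        RGet rid (upd R s (Some [seq x <- L | x \in sg]))
      else cs
  | RPut rid t v A, Ack rid' => if rid' == rid then RPut rid t v (s |: A) else cs
  | _, _ => cs
  end.

Definition nreplies (T : Type) (R : S -> option T) : nat := #|[set s | isSome (R s)]|.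

Definition maxtag (R : S -> option (option Tag)) : Tag :=
  foldr (fun s acc => if R s is Some (Some t) then tmax t acc else acc) t0 (enum S).

Definition nlists_with (R : S -> option (seq SEntry)) (t : Tag) : nat :=
  #|[set s | if R s is Some L then t \in [seq se_tag x | x <- L] else false]|.

Definition elems_with (R : S -> option (seq SEntry)) (t : Tag) : seq E :=
  [seq se_elem x | x <- flatten [seq odflt [::] (R s) | s <- enum S] & se_tag x == t].

Definition put_triples (c : nat) (t : Tag) (v : V) : seq SEntry :=
  [seq (t, frag v s, Some c) | s <- enum S].
Definition put_msgs (c rid : nat) (t : Tag) (v : V) : seq NetMsg :=
  [seq ToServer c s (Put rid (t, frag v s, Some c)) | s <- enum S].

Definition setcl (f : nat -> CState) (c : nat) (x : CState) : nat -> CState :=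
  fun c' => if c' == c then x else f c'.

Inductive step : State -> State -> Prop :=
| StInvW st c v :
    cl st c = Idle ->
    step st (mkState (lists st)
                     (net st ++ [seq ToServer c s (QTag (ctr st)) | s <- enum S])
                     (setcl (cl st) c (WTag (ctr st) v (fun _ => None)))
                     (signed st) (rcons (hist st) (EInvW c v)) (ctr st).+1)
| StInvR st c :
    cl st c = Idle ->
    step st (mkState (lists st)
                     (net st ++ [seq ToServer c s (QData (ctr st)) | s <- enum S])
                     (setcl (cl st) c (RGet (ctr st) (fun _ => None)))
                     (signed st) (rcons (hist st) (EInvR c)) (ctr st).+1)
| StDelS st n1 n2 c s m :
    net st = n1 ++ ToServer c s m :: n2 -> s \notin B ->
    step st (mkState (upd (lists st) s (server_step (signed st) (lists st s) s c m).1)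
                     (n1 ++ n2 ++ (server_step (signed st) (lists st s) s c m).2)
                     (cl st) (signed st) (hist st) (ctr st))
| StDelC st n1 n2 s c m :
    net st = n1 ++ ToClient s c m :: n2 ->
    step st (mkState (lists st) (n1 ++ n2)
                     (setcl (cl st) c (client_recv (signed st) (cl st c) s m))
                     (signed st) (hist st) (ctr st))
| StByz st s c m :
    s \in B ->
    step st (mkState (lists st) (net st)
                     (setcl (cl st) c (client_recv (signed st) (cl st c) s m))
                     (signed st) (hist st) (ctr st))
| StWTagDone st c rid v R :
    cl st c = WTag rid v R -> qsize <= nreplies R ->
    let t := ((maxtag R).1.+1, c) in
    step st (mkState (lists st) (net st ++ put_msgs c (ctr st) t v)
                     (setcl (cl st) c (WPut (ctr st) t set0))
                     (signed st ++ put_triples c t v) (hist st) (ctr st).+1)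
| StWPutDone st c rid t A :
    cl st c = WPut rid t A -> qsize <= #|A| ->
    step st (mkState (lists st) (net st) (setcl (cl st) c Idle)
                     (signed st) (rcons (hist st) (ERespW c t)) (ctr st))
| StRGetDone st c rid R t :
    cl st c = RGet rid R -> qsize <= nreplies R ->
    k <= nlists_with R t ->
    (forall t', k <= nlists_with R t' -> tle t' t) ->
    let v := dec (elems_with R t) in
    step st (mkState (lists st) (net st ++ put_msgs c (ctr st) t v)
                     (setcl (cl st) c (RPut (ctr st) t v set0))
                     (signed st ++ put_triples c t v) (hist st) (ctr st).+1)
| StRPutDone st c rid t v A :
    cl st c = RPut rid t v A -> qsize <= #|A| ->
    step st (mkState (lists st) (net st) (setcl (cl st) c Idle)
                     (signed st) (rcons (hist st) (ERespR c t v)) (ctr st)).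

Definition init_state : State :=
  mkState (fun s => [:: (t0, frag v0 s, None)]) [::] (fun _ => Idle)
          [seq (t0, frag v0 s, None) | s <- enum S] [::] 0.

Inductive reachable : State -> Prop :=
| ReachInit : reachable init_state
| ReachStep st st' : reachable st -> step st st' -> reachable st'.

End Protocol.

(* Main.v *)
Require Import Defs.
From mathcomp Require Import all_boot zify.
Set Implicit Arguments.
Unset Strict Implicit.
Unset Printing Implicit Defensive.

Lemma tle_refl a : tle a a.
Proof. case: a => [a1 a2]; rewrite /tle /=. lia. Qed.
Lemma tle_trans a b c : tle a b -> tle b c -> tle a c.
Proof. case: a b c => [a1 a2] [b1 b2] [c1 c2]; rewrite /tle /=. lia. Qed.
Lemma tle_total a b : tle a b || tle b a.
Proof. case: a b => [a1 a2] [b1 b2]; rewrite /tle /=. lia. Qed.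
Lemma tle_anti a b : tle a b -> tle b a -> a = b.
Proof. case: a b => [a1 a2] [b1 b2]; rewrite /tle /= => H1 H2. have e1: a1 = b1 by lia. have e2 : a2 = b2 by lia. by rewrite e1 e2. Qed.
Lemma tle_t0 a : tle t0 a.
Proof. case: a => [a1 a2]; rewrite /tle /=. lia. Qed.
Lemma ntle_le a b : ~~ tle a b -> tle b a.
Proof. by move=> H; move: (tle_total a b); rewrite (negbTE H). Qed.

Section GC.
Variables (delta : nat) (E : eqType).
Notation Ent := (SEntry E).
Notation tags L := [seq se_tag x | x <- L].

Definition Pk (L : seq Ent) (t : Tag) : bool :=
  (t \in tags L) ||
  [&& delta < size L, uniq (tags L) & all (fun x => ~~ tle (se_tag x) t) L].

Lemma exists_min (l : seq Ent) : l != [::] ->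
  exists2 y, y \in l & all (fun z => tle (se_tag y) (se_tag z)) l.
Proof.
elim: l => [//|a l IH] _.
case: (altP (l =P [::])) => [->|ne].
  by exists a; rewrite ?mem_head //= tle_refl.
case: (IH ne) => y yin ymin.
case: (boolP (tle (se_tag a) (se_tag y))) => ay.
  exists a; first exact: mem_head.
  rewrite /= tle_refl /=; apply/allP => z zin.
  exact: tle_trans ay (allP ymin z zin).
exists y; first by rewrite in_cons yin orbT.
by rewrite /= ymin (ntle_le ay).
Qed.

Lemma count_min (l : seq Ent) : l != [::] -> uniq (tags l) ->
  count (fun y => all (fun z => tle (se_tag y) (se_tag z)) l) l = 1.
Proof.
move=> ne ul; case: (exists_min ne) => m min mmin.
apply/eqP; rewrite eqn_leq; apply/andP; split; last first.
  by rewrite -has_count; apply/hasP; exists m.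
apply: (@leq_trans (count (fun y => se_tag y == se_tag m) l)).
  rewrite -(@eq_in_count _ (fun y => all (fun z => tle (se_tag y) (se_tag z)) l &&
                                (se_tag y == se_tag m))); last first.
    move=> y yin /=; case: (boolP (all _ l)) => //= ymin.
    have := (allP ymin m min). have := (allP mmin y yin). move=> H1 H2. rewrite (tle_anti H2 H1) eqxx //.
  by apply: sub_count => y /andP[].
have -> : count (fun y => se_tag y == se_tag m) l = count (pred1 (se_tag m)) (tags l).
  by rewrite count_map.
by rewrite count_uniq_mem // leq_b1.
Qed.

Lemma gc_props (x : Ent) L : uniq (tags L) -> size L <= delta.+1 -> se_tag x \notin tags L ->
  [/\ uniq (tags (gc delta (x::L))), size (gc delta (x::L)) <= delta.+1,
     {subset gc delta (x::L) <= x::L} &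
     forall t, (t \in tags (x::L)) || (delta < size L) && all (fun y => ~~ tle (se_tag y) t) L ->
        Pk (gc delta (x::L)) t].
Proof.
move=> uL sL xL.
have ul : uniq (tags (x :: L)) by rewrite /= xL uL.
rewrite /gc; case: ifP => big; last first.
  split => //; first by move: big => /negbT; rewrite -leqNgt.
  move=> t /orP[tin|/andP[dL _]]; first by rewrite /Pk tin.
  by move: big; rewrite /= ltnS dL.
pose minp := (fun y : Ent => all (fun z => tle (se_tag y) (se_tag z)) (x :: L)).
change [seq y : Ent <- x :: L | ~~ all (fun z => tle (se_tag y) (se_tag z)) (x :: L)] with
  [seq y : Ent <- x :: L | ~~ minp y].
have cm := @count_min (x :: L) isT ul.
have sf : size [seq y <- x :: L | ~~ minp y] = delta.+1.
  rewrite size_filter; move: (count_predC minp (x :: L)); rewrite cm.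
  move: big sL; rewrite /= => big sL0 H.
  change (count (predC minp) L) with (count (fun y : Ent => ~~ minp y) L) in H; lia.
have uf : uniq (tags [seq y <- x :: L | ~~ minp y]).
  apply: subseq_uniq ul; apply: map_subseq; exact: filter_subseq.
split => //; first by rewrite sf.
  by move=> y; rewrite mem_filter => /andP[].
move=> t Ht.
have kept : forall y, y \in [seq y <- x :: L | ~~ minp y] ->
    exists2 z, z \in x :: L & ~~ tle (se_tag y) (se_tag z).
  move=> y; rewrite mem_filter => /andP[/allPn[z zin nz] _]; by exists z.
case: (boolP (t \in tags [seq y <- x :: L | ~~ minp y])) => tin; first by rewrite /Pk tin.
rewrite /Pk (negbTE tin) orFb sf ltnSn uf !andTb.
apply/allP => y yin; case: (kept y yin) => z zin nyz.
move: Ht => /orP[/mapP[y0 y0in ety0]|/andP[_ allL]].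
  have y0min : minp y0.
    case: (boolP (minp y0)) => // ny0; exfalso; apply: (negP tin); apply/mapP; exists y0 => //.
    by rewrite mem_filter ny0.
  apply/negP => yt; apply: (negP nyz); apply: tle_trans yt _.
  by rewrite ety0; apply: (allP y0min).
have yin' : y \in x :: L by move: yin; rewrite mem_filter => /andP[].
move: yin'; rewrite in_cons => /orP[/eqP yx|yL]; last exact: (allP allL).
subst y.
have zL : z \in L.
  move: zin; rewrite in_cons => /orP[/eqP zx|//].
  by move: nyz; rewrite zx tle_refl.
apply/negP => xt; move: (allP allL z zL) => /negP; apply.
move: nyz => /ntle_le zy; exact: tle_trans zy xt.
Qed.

Lemma all_tag_neq (L : seq Ent) t : all (fun y => se_tag y != t) L = (t \notin tags L).
Proof. elim: L => //= a L ->; rewrite in_cons negb_or eq_sym. by []. Qed.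

Lemma put_props (sg : seq Ent) L x :
  uniq (tags L) -> size L <= delta.+1 -> {subset L <= sg} ->
  let L' := if (x \in sg) && all (fun y => se_tag y != se_tag x) L then gc delta (x :: L) else L in
  [/\ uniq (tags L'), size L' <= delta.+1, {subset L' <= sg},
      (x \in sg -> Pk L' (se_tag x)) & forall t, Pk L t -> Pk L' t].
Proof.
move=> uL sL subL /=; rewrite all_tag_neq.
case: (boolP (x \in sg)) => xsg /=; last first.
  split => //.
case: (boolP (se_tag x \in tags L)) => xL /=.
  by split => // _; rewrite /Pk xL.
have [u s sub P] := gc_props (x:=x) uL sL xL.
split => //.
- by move=> y /sub; rewrite in_cons => /orP[/eqP ->//|/subL].
- by move=> _; apply: P; rewrite /= in_cons eqxx.
- move=> t /orP[tL|/and3P[d _ a]]; apply: P; first by rewrite in_cons tL orbT.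
  by rewrite d a orbT.
Qed.
End GC.

Section Hist.
Variable V : Type.
Implicit Types (h : seq (Event V)) (e : Event V).

Definition pend h c i := [/\ i < size h, ev_client (evt h i) = c &
  forall j, i < j -> j < size h -> ev_client (evt h j) != c].

Lemma evt_rcons_lt h e i : i < size h -> evt (rcons h e) i = evt h i.
Proof. by move=> lt; rewrite /evt nth_rcons lt. Qed.

Lemma evt_rcons_eq h e : evt (rcons h e) (size h) = e.
Proof. by rewrite /evt nth_rcons ltnn eqxx. Qed.

Lemma size_rcons' h e : size (rcons h e) = (size h).+1.
Proof. exact: size_rcons. Qed.

Lemma pend_rcons_other h e c i : ev_client e != c ->
  pend (rcons h e) c i <-> pend h c i.
Proof.
move=> ne; split.
- case=> lt ec hj.
  have lt' : i < size h.
    rewrite size_rcons ltnS leq_eqVlt in lt; case/orP: lt => // /eqP ei.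
    by move: ec; rewrite ei evt_rcons_eq => /eqP; rewrite (negbTE ne).
  split => //; first by rewrite -(evt_rcons_lt e lt').
  move=> j ij jn; rewrite -(evt_rcons_lt e jn); apply: hj => //.
  by rewrite size_rcons ltnS ltnW.
- case=> lt ec hj; split; first by rewrite size_rcons ltnS ltnW.
    by rewrite evt_rcons_lt.
  move=> j ij; rewrite size_rcons ltnS leq_eqVlt => /orP[/eqP ->|jn].
    by rewrite evt_rcons_eq.
  by rewrite evt_rcons_lt //; apply: hj.
Qed.

Lemma pend_rcons_self h e c i : ev_client e = c ->
  pend (rcons h e) c i <-> i = size h.
Proof.
move=> ec; split.
- case=> lt _ hj; apply/eqP; rewrite eqn_leq -ltnS -(size_rcons h e) lt /=.
  rewrite leqNgt; apply/negP => ilt.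
  by move: (hj (size h) ilt); rewrite size_rcons ltnSn evt_rcons_eq ec eqxx => /(_ isT).
- move=> ->; split; first by rewrite size_rcons.
    by rewrite evt_rcons_eq.
  by move=> j ij; rewrite size_rcons ltnS leqNgt ij.
Qed.

Lemma done_before_rcons h e i j : j <= size h ->
  done_before (rcons h e) i j = done_before h i j.
Proof.
move=> jn; rewrite /done_before; apply: eq_in_has => x; rewrite mem_iota => /andP[a b].
have xl : x < size h by lia.
have il : i < size h by lia.
by rewrite !evt_rcons_lt.
Qed.

Lemma concurrent_rcons h e i j : i < size h -> j < size h ->
  concurrent (rcons h e) i j = concurrent h i j.
Proof. by move=> a b; rewrite /concurrent !done_before_rcons // ltnW. Qed.

Lemma wcl_rcons delta h e : write_concurrency_le delta (rcons h e) -> write_concurrency_le delta h.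
Proof.
move=> W ir irn rinv.
have := W ir; rewrite size_rcons evt_rcons_lt // => /(_ (leqW irn) rinv).
apply: leq_trans.
rewrite -addn1 iotaD count_cat add0n.
apply: leq_trans (leq_addr _ _).
rewrite leq_eqVlt; apply/orP; left; apply/eqP.
apply: eq_in_count => x; rewrite mem_iota add0n => /andP[_ xn].
by rewrite concurrent_rcons // evt_rcons_lt.
Qed.

Lemma last_pend h c i : i < size h -> ev_client (evt h i) = c -> exists p, pend h c p /\ i <= p.
Proof.
elim/last_ind: h i => [//|h e IH] i.
rewrite size_rcons ltnS leq_eqVlt => /orP[/eqP ->|lt].
  rewrite evt_rcons_eq => ec; exists (size h); split => //.
  by apply/pend_rcons_self.
case: (eqVneq (ev_client e) c) => ec.
  move=> _; exists (size h); split; [exact/pend_rcons_self|exact: ltnW].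
rewrite evt_rcons_lt // => eic; case: (IH i lt eic) => p [pp ip].
by exists p; split => //; apply/pend_rcons_other.
Qed.

End Hist.

Section Main.
Variables (S : finType) (B : {set S}) (k delta : nat) (V E : eqType)
  (enc : V -> 'I_#|S| -> E) (dec : seq E -> V) (v0 : V).
Notation St := (State S V E).
Notation Ent := (SEntry E).
Notation tags L := [seq se_tag x | x <- L].
Notation Pk := (Pk delta).
Notation CSt := (CState S V E).
Notation hseq := (seq (Event V)).

Definition WT (h : hseq) (cls : nat -> CSt) iw (t : Tag) : Prop :=
  exists v, evt h iw = EInvW t.2 v /\
   ((exists j, [/\ iw < j, j < size h, evt h j = ERespW t.2 t &
                 forall j', iw < j' -> j' < j -> ev_client (evt h j') != t.2])
    \/ (pend h t.2 iw /\ exists rid A, cls t.2 = WPut V E rid t A)).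

Definition Good (g : nat -> {set S}) (h : hseq) ir (s : S) (L : seq Ent) :=
  forall jw c' t', jw < ir -> evt h jw = ERespW c' t' -> s \in g jw -> Pk L t'.

Definition rid_of (m : NetMsg S E) : nat :=
  match m with
  | ToServer _ _ (QTag r) | ToServer _ _ (QData r) | ToServer _ _ (Put r _) => r
  | ToClient _ _ (RTag r _) | ToClient _ _ (RData r _) | ToClient _ _ (Ack r) => r
  end.

Record Inv (st : St) (g : nat -> {set S}) : Prop := {
 iLI : forall s, [/\ uniq (tags (lists st s)), size (lists st s) <= delta.+1 &
                    {subset lists st s <= signed st}];
 iS1 : forall x, x \in signed st -> se_tag x = t0 \/ exists iw, WT (hist st) (cl st) iw (se_tag x);
 iF : forall m, List.In m (net st) -> rid_of m < ctr st;
 iNPut : forall c s rid x t A, List.In (ToServer c s (Put rid x)) (net st) ->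
           cl st c = WPut V E rid t A -> se_tag x = t /\ x \in signed st;
 iNAck : forall s c rid t A, s \notin B -> List.In (ToClient s c (Ack E rid)) (net st) ->
           cl st c = WPut V E rid t A -> Pk (lists st s) t;
 iNData : forall s c rid L, s \notin B -> List.In (ToClient s c (RData rid L)) (net st) ->
           {subset L <= signed st} /\
           forall R ir, cl st c = RGet V rid R -> pend (hist st) c ir -> Good g (hist st) ir s L;
 iCW : forall c rid v R, cl st c = WTag E rid v R ->
           exists iw v', pend (hist st) c iw /\ evt (hist st) iw = EInvW c v';
 iCWP : forall c rid t A, cl st c = WPut V E rid t A ->
           (exists iw v', pend (hist st) c iw /\ evt (hist st) iw = EInvW c v') /\
           forall s, s \in A -> s \notin B -> Pk (lists st s) t;
 iCR : forall c rid R, cl st c = RGet V rid R -> exists ir,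
           [/\ pend (hist st) c ir, evt (hist st) ir = EInvR c &
               forall s L, R s = Some L -> {subset L <= signed st} /\
                                          (s \notin B -> Good g (hist st) ir s L)];
 iCRP : forall c rid t v A, cl st c = RPut E rid t v A -> exists ir,
           [/\ pend (hist st) c ir, evt (hist st) ir = EInvR c &
               (write_concurrency_le delta (hist st) ->
                forall jw c' t', jw < ir -> evt (hist st) jw = ERespW c' t' -> tle t' t)];
 iCI : forall c i, cl st c = Idle S V E -> pend (hist st) c i -> is_resp (evt (hist st) i);
 iHW : forall i i', i < i' -> i' < size (hist st) -> ~~ is_resp (evt (hist st) i) ->
           ~~ is_resp (evt (hist st) i') -> ev_client (evt (hist st) i) = ev_client (evt (hist st) i') ->
           done_before (hist st) i i';
 iI2 : forall jw c' t', jw < size (hist st) -> evt (hist st) jw = ERespW c' t' ->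
           qsize S k <= #|g jw| /\ forall s, s \in g jw -> s \notin B -> Pk (lists st s) t';
 iIH : write_concurrency_le delta (hist st) -> forall i j c t v jw c' t',
           i < j -> j < size (hist st) -> evt (hist st) i = EInvR c ->
           evt (hist st) j = ERespR c t v -> ~~ done_before (hist st) i j ->
           jw < i -> evt (hist st) jw = ERespW c' t' -> tle t' t
}.

Lemma inv_init : Inv (init_state enc v0) (fun _ => set0).
Proof.
constructor => //=.
- move=> s; split => //.
  by move=> x; rewrite inE => /eqP ->; apply/mapP; exists s; rewrite ?mem_enum.
- by move=> x /mapP[s _ ->]; left.
- by move=> ? ? ? [].
Qed.


Lemma In_del (T : Type) (y m : T) n n1 n2 o :
  n = n1 ++ m :: n2 -> List.In y (n1 ++ n2 ++ o) -> List.In y n \/ List.In y o.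
Proof.
move=> -> /List.in_app_iff[H|/List.in_app_iff[H|H]]; [left|left|right] => //;
  apply/List.in_app_iff; [left|right] => //; by right.
Qed.

Lemma In_app_l (T : Type) (y : T) n o : List.In y (n ++ o) -> List.In y n \/ List.In y o.
Proof. by move/List.in_app_iff. Qed.

Lemma inv_delS st g n1 n2 c s m : Inv st g -> net st = n1 ++ ToServer c s m :: n2 -> s \notin B ->
  Inv (mkState (upd (lists st) s (server_step delta (signed st) (lists st s) s c m).1)
               (n1 ++ n2 ++ (server_step delta (signed st) (lists st s) s c m).2)
               (cl st) (signed st) (hist st) (ctr st)) g.
Proof.
move=> I en sB.
have [uL sL subL] := iLI I s.
have PP := fun x => @put_props delta E _ _ x uL sL subL.
have Ppres : forall s' t, Pk (lists st s') t ->
    Pk (upd (lists st) s (server_step delta (signed st) (lists st s) s c m).1 s') t.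
  move=> s' t; rewrite /upd; case: (eqVneq s' s) => [->|//].
  case: m {en} => [rid|rid|rid x] //=.
  by case: (PP x) => _ _ _ _; apply.
have mIn : List.In (ToServer c s m) (net st).
  by rewrite en; apply/List.in_app_iff; right; left.
have mF := iF I mIn.
constructor => /=.
- move=> s'; rewrite /upd; case: (eqVneq s' s) => [e|_]; last exact: iLI I s'.
  rewrite ?e {e}.
  case: m {en mIn mF Ppres} => [rid|rid|rid x] //=; by case: (PP x).
- exact: iS1 I.
- move=> y /(In_del en) [/(iF I)//|].
  case: m {en mIn Ppres} mF => [rid|rid|rid x] /= mF.
  + by case: (maxentry _) => [a|] //= [<-|//].
  + by case=> [<-|//].
  + by case=> [<-|//].
- move=> c' s' rid x t A /(In_del en)[|]; first (move=> H Hc; exact: (@iNPut st g I c' s' rid x t A H Hc)).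
  case: m {en mIn mF Ppres} => [rid'|rid'|rid' x'] /=.
  + by case: (maxentry _) => [a|] //= [].
  + by case.
  + by case.
- move=> s' c' rid t A s'B HIn Hc; case/(In_del en): HIn => [H|].
    by apply: Ppres; apply: (iNAck I s'B H Hc).
  case: m {en mF Ppres} mIn => [rid'|rid'|rid' x'] /= mIn.
  + by case: (maxentry _) => [a|] //= [].
  + by case.
  + case=> // [[es ec er]]; subst s' c' rid'.
    have [<- xsg] := iNPut I mIn Hc.
    by rewrite /upd eqxx /=; case: (PP x') => _ _ _ /(_ xsg).
- move=> s' c' rid L s'B /(In_del en)[H|]; first exact: (@iNData st g I s' c' rid L s'B H).
  case: m {en mF Ppres} mIn => [rid'|rid'|rid' x'] /= mIn.
  + by case: (maxentry _) => [a|] //= [].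
  + case=> // [[es ec er eL]]; subst s' c' rid' L; split => // R ir Hc [irn _ _] jw c'' t' jwir ejw sg.
    have [_ P] := iI2 I (ltn_trans jwir irn) ejw.
    exact: P sg sB.
  + by case.
- exact: iCW I.
- move=> c' rid t A Hc; have [H1 H2] := iCWP I Hc; split => // s' s'A s'B.
  exact/Ppres/H2.
- exact: iCR I.
- exact: iCRP I.
- exact: iCI I.
- exact: iHW I.
- move=> jw c' t' jwn ejw; have [H1 H2] := iI2 I jwn ejw; split => // s' s'g s'B.
  exact/Ppres/H2.
- exact: iIH I.
Qed.


Section CR.
Variables (sg : seq Ent) (s : S) (m : CMsg E).

Lemma cr_Idle cs : client_recv sg cs s m = Idle S V E -> cs = Idle S V E.
Proof.
case: cs => [|rid' v' R'|rid' t' A'|rid' R'|rid' t' v' A'] //=;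
  case: m => [r x|r L|r] //=; by case: ifP.
Qed.

Lemma cr_WTag cs rid (v : V) R : client_recv sg cs s m = WTag E rid v R -> exists R0, cs = WTag E rid v R0.
Proof.
case: cs => [|rid' v' R'|rid' t' A'|rid' R'|rid' t' v' A'] //=;
  case: m => [r x|r L|r] //=; try (by case: ifP); try (by case=> <- <- _; eexists).
case: ifP => _ [<- <- _]; by eexists.
Qed.

Lemma cr_WPut cs rid t A : client_recv sg cs s m = WPut V E rid t A ->
  exists A0, cs = WPut V E rid t A0 /\ (A = A0 \/ (A = s |: A0 /\ m = Ack E rid)).
Proof.
case: cs => [|rid' v' R'|rid' t' A'|rid' R'|rid' t' v' A'] //=;
  case: m => [r x|r L|r] //=; try (by case: ifP); try (by case=> <- <- <-; eexists; split; [|left]).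
case: ifP => [/eqP -> [<- <- <-]|_ [<- <- <-]]; eexists; split; eauto.
Qed.

Lemma cr_RGet cs rid R : client_recv sg cs s m = RGet V rid R ->
  exists R0, cs = RGet V rid R0 /\ (R = R0 \/ exists L, [/\ m = RData rid L, R0 s = None &
      R = upd R0 s (Some [seq x <- L | x \in sg])]).
Proof.
case: cs => [|rid' v' R'|rid' t' A'|rid' R'|rid' t' v' A'] //=;
  case: m => [r x|r L|r] //=; try (by case: ifP); try (by case=> <- <-; eexists; split; [|left]).
case: ifP => [/andP[/eqP -> /eqP e] [<- <-]|_ [<- <-]]; eexists; split; eauto.
right; exists L; split => //.
Qed.

Lemma cr_RPut cs rid t (v : V) A : client_recv sg cs s m = RPut E rid t v A ->
  exists A0, cs = RPut E rid t v A0.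
Proof.
case: cs => [|rid' v' R'|rid' t' A'|rid' R'|rid' t' v' A'] //=;
  case: m => [r x|r L|r] //=; try (by case: ifP); try (by case=> <- <- <- _; eexists).
case: ifP => _ [<- <- <- _]; by eexists.
Qed.
Lemma cr_WPut_fwd rid t A : exists A1, client_recv sg (WPut V E rid t A) s m = WPut V E rid t A1.
Proof. case: m => [r x|r L|r] /=; try by exists A. by case: ifP => _; eexists. Qed.
End CR.

Lemma inv_recv st g net' c s m : Inv st g ->
  (forall y, List.In y net' -> List.In y (net st)) ->
  (s \notin B -> List.In (ToClient s c m) (net st)) ->
  Inv (mkState (lists st) net' (setcl (cl st) c (client_recv (signed st) (cl st c) s m))
               (signed st) (hist st) (ctr st)) g.
Proof.
move=> I sub Hm.
set cl' := setcl _ _ _.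
have hWP : forall c' rid t A, cl' c' = WPut V E rid t A -> exists A0, cl st c' = WPut V E rid t A0 /\ (A = A0 \/ (c' = c /\ A = s |: A0 /\ m = Ack E rid)).
  move=> c' rid t A; rewrite /cl' /setcl; case: (eqVneq c' c) => [->|_].
    by case/cr_WPut => A0 [-> [->|[-> ->]]]; exists A0; split => //; [left|right].
  by move=> ->; exists A; split => //; left.
have hWT : forall c' rid v R, cl' c' = WTag E rid v R -> exists R0, cl st c' = WTag E rid v R0.
  move=> c' rid v R; rewrite /cl' /setcl; case: (eqVneq c' c) => [->|_]; first exact: cr_WTag.
  by move=> ->; exists R.
have hRG : forall c' rid R, cl' c' = RGet V rid R -> exists R0, cl st c' = RGet V rid R0 /\ (R = R0 \/ exists L, [/\ c' = c, m = RData rid L, R0 s = None &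
      R = upd R0 s (Some [seq x <- L | x \in signed st])]).
  move=> c' rid R; rewrite /cl' /setcl; case: (eqVneq c' c) => [->|_].
    by case/cr_RGet => R0 [-> [->|[L [e1 e2 e3]]]]; exists R0; split => //; [left|right; exists L].
  by move=> ->; exists R; split => //; left.
have hRP : forall c' rid t v A, cl' c' = RPut E rid t v A -> exists A0, cl st c' = RPut E rid t v A0.
  move=> c' rid t v A; rewrite /cl' /setcl; case: (eqVneq c' c) => [->|_]; first exact: cr_RPut.
  by move=> ->; exists A.
have hI : forall c', cl' c' = Idle S V E -> cl st c' = Idle S V E.
  move=> c'; rewrite /cl' /setcl; case: (eqVneq c' c) => [->|//]; exact: cr_Idle.
have hWP' : forall c' rid t A, cl st c' = WPut V E rid t A -> exists A1, cl' c' = WPut V E rid t A1.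
  move=> c' rid t A; rewrite /cl' /setcl; case: (eqVneq c' c) => [->|_ ->]; last by exists A.
  by move=> ->; exact: cr_WPut_fwd.
constructor => /=.
- exact: iLI I.
- move=> x /(iS1 I)[->|[iw [v [e H]]]]; [by left|right; exists iw, v; split => //].
  case: H => [H|[p [rid [A Hc]]]]; [by left|right; split => //].
  by case: (hWP' _ _ _ _ Hc) => A1 ->; exists rid, A1.
- by move=> y /sub /(iF I).
- move=> c' s' rid x t A /sub H /hWP [A0 [Hc _]]; exact: (@iNPut st g I c' s' rid x t A0 H Hc).
- move=> s' c' rid t A s'B /sub H /hWP [A0 [Hc _]]; exact: (@iNAck st g I s' c' rid t A0 s'B H Hc).
- move=> s' c' rid L s'B /sub H; have [H1 H2] := (@iNData st g I s' c' rid L s'B H).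
  split; first exact: H1.
  move=> R ir /hRG [R0 [Hc _]]; exact: H2 Hc.
- by move=> c' rid v R /hWT [R0 /(iCW I)].
- move=> c' rid t A /hWP [A0 [Hc HA]]; have [H1 H2] := iCWP I Hc; split => // s' s'A s'B.
  case: HA => [eA|[ec [eA em]]]; first by apply: H2 => //; rewrite -eA.
  move: s'A; rewrite eA in_setU1 => /orP[/eqP es|]; last by move=> ?; exact: H2.
  subst s' c m; exact: (@iNAck st g I s c' rid t A0 s'B (Hm s'B) Hc).
- move=> c' rid R /hRG [R0 [Hc HR]]; have [ir [p e H]] := iCR I Hc; exists ir; split => //.
  move=> s' L; case: HR => [->|[L0 [ec em eR0 eR]]]; first exact: H.
  rewrite eR /upd; case: (eqVneq s' s) => [es|_]; last exact: H.
  subst s' c m; case=> <-; split; first by move=> x; rewrite mem_filter => /andP[].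
  move=> sB; have [H1 H2] := @iNData st g I s c' rid L0 sB (Hm sB).
  have -> : [seq x <- L0 | x \in signed st] = L0.
    by apply/all_filterP/allP.
  exact: H2 Hc p.
- by move=> c' rid t v A /hRP [A0 /(iCRP I)].
- move=> c' i /hI Hc p; exact: (@iCI st g I c' i Hc p).
- exact: iHW I.
- exact: iI2 I.
- exact: iIH I.
Qed.


Lemma evt_lt (h : hseq) i : ~~ is_rinv (evt h i) -> i < size h.
Proof. rewrite ltnNge; apply: contra => H; by rewrite /evt nth_default. Qed.

Lemma Good_ext g g' (h h' : hseq) ir s L : Good g h ir s L -> ir <= size h ->
  (forall j, j < size h -> evt h' j = evt h j) -> (forall j, j < size h -> g' j = g j) ->
  Good g' h' ir s L.
Proof.
move=> G irn eh eg jw c' t' jwir; have jwn : jw < size h by apply: leq_trans jwir irn.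
rewrite eh // eg //; exact: G.
Qed.

Lemma WT_ext (h h' : hseq) cls cls' iw t : WT h cls iw t ->
  (forall j, j < size h -> evt h' j = evt h j) -> size h <= size h' ->
  (forall rid A, cls t.2 = WPut V E rid t A -> pend h t.2 iw ->
     (exists rid' A', cls' t.2 = WPut V E rid' t A' /\ pend h' t.2 iw) \/
     (evt h' (size h) = ERespW t.2 t /\ size h < size h')) ->
  WT h' cls' iw t.
Proof.
move=> [v [ei H]] eh sh Hc.
have iwn : iw < size h by apply: evt_lt; rewrite ei.
exists v; split; first by rewrite eh.
case: H => [[j [a b c d]]|[p [rid [A Hcl]]]].
  left; exists j; split => //; first exact: leq_trans b sh.
    by rewrite eh.
  by move=> j' a' b'; rewrite eh ?(ltn_trans b' b) //; apply: d.
case: (Hc rid A Hcl p) => [[rid' [A' [H1 H2]]]|[H1 H2]].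
  by right; split => //; exists rid', A'.
left; exists (size h); split => //.
move=> j' a' b'; rewrite eh //; case: p => _ _; exact.
Qed.

Lemma pend_lt (h : hseq) c i : pend h c i -> i < size h.
Proof. by case. Qed.


Lemma inv_inv st g c (e : Event V) (X : CSt) : Inv st g -> cl st c = Idle S V E ->
  ev_client e = c -> ~~ is_resp e -> X <> Idle S V E ->
  (forall rid t A, X <> WPut V E rid t A) -> (forall rid t v A, X <> RPut E rid t v A) ->
  (forall rid v R, X = WTag E rid v R -> exists v', e = EInvW c v') ->
  (forall rid R, X = RGet V rid R -> [/\ e = EInvR c, rid = ctr st & forall s, R s = None]) ->
  forall nt,
  (forall y, List.In y nt -> rid_of y = ctr st /\ exists c s r, y = ToServer c s r /\ forall rid x, r <> Put rid x) ->
  Inv (mkState (lists st) (net st ++ nt) (setcl (cl st) c X) (signed st) (rcons (hist st) e) (ctr st).+1) g.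
Proof.
move=> I Hc ec nre nXI nXW nXR XW XR nt Hnt.
have eh : forall j, j < size (hist st) -> evt (rcons (hist st) e) j = evt (hist st) j.
  by move=> j; apply: evt_rcons_lt.
have hpo : forall c' i, c' != c -> pend (rcons (hist st) e) c' i <-> pend (hist st) c' i.
  by move=> c' i ne; apply: pend_rcons_other; rewrite ec eq_sym.
have en := evt_rcons_eq (hist st) e.
have sh : size (rcons (hist st) e) = (size (hist st)).+1 by rewrite size_rcons.
have oth : forall c' Y, setcl (cl st) c X c' = Y -> (c' = c /\ X = Y) \/ (c' != c /\ cl st c' = Y).
  move=> c' Y; rewrite /setcl; case: (eqVneq c' c) => [->|ne]; by [left|right].
have Gx : forall ir s L, ir < size (hist st) -> Good g (hist st) ir s L -> Good g (rcons (hist st) e) ir s L.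
  by move=> ir s L irn G; apply: Good_ext G (ltnW irn) eh _.
constructor => /=.
- exact: iLI I.
- move=> x /(iS1 I)[->|[iw H]]; [by left|right; exists iw].
  apply: WT_ext H eh _ _; first by rewrite sh.
  move=> rid A Hcl p; left; exists rid, A; split.
    rewrite /setcl; case: (eqVneq (se_tag x).2 c) => [ex|//].
    by move: Hcl; rewrite ex Hc.
  apply/hpo => //; apply/eqP => ex; by move: Hcl; rewrite ex Hc.
- move=> y /List.in_app_iff[H|/Hnt [-> _]//]; exact: ltnW (@iF st g I y H).
- move=> c' s' rid x t A /List.in_app_iff[H|/Hnt [_ [c0 [s0 [r [er nr]]]]]]; last first.
    by case: er => _ _ er; case: (nr rid x); rewrite er.
  case/oth => [[_ eX]|[_ Hc']]; first by case: (nXW rid t A).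
  exact: (@iNPut st g I c' s' rid x t A H Hc').
- move=> s' c' rid t A s'B /List.in_app_iff[H|/Hnt [_ [c0 [s0 [r [er nr]]]]]] //.
  case/oth => [[_ eX]|[_ Hc']]; first by case: (nXW rid t A).
  exact: (@iNAck st g I s' c' rid t A s'B H Hc').
- move=> s' c' rid L s'B /List.in_app_iff[H|/Hnt [_ [c0 [s0 [r [er nr]]]]]] //.
  have [H1 H2] := (@iNData st g I s' c' rid L s'B H); split => // R ir.
  case/oth => [[ecc eX] p|[ne Hc'] /hpo p].
    subst c'; have [_ er _] := XR _ _ eX.
    by move: (@iF st g I _ H); rewrite /= er ltnn.
  have pp := p ne; apply: Gx; [exact: pend_lt pp|exact: H2 Hc' pp].
- move=> c' rid v R /oth [[-> eX]|[ne Hc']].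
    have [v' ev] := XW _ _ _ eX.
    by exists (size (hist st)), v'; split; [apply/pend_rcons_self|rewrite en].
  have [iw [v' [p ev]]] := (@iCW st g I c' rid v R Hc').
  by exists iw, v'; split; [apply/hpo|rewrite eh ?(pend_lt p)].
- move=> c' rid t A /oth [[-> eX]|[ne Hc']]; first by case: (nXW rid t A).
  have [[iw [v' [p ev]]] H2] := (@iCWP st g I c' rid t A Hc'); split => //.
  by exists iw, v'; split; [apply/hpo|rewrite eh ?(pend_lt p)].
- move=> c' rid R /oth [[-> eX]|[ne Hc']].
    have [e1 _ e3] := XR _ _ eX.
    exists (size (hist st)); split; [exact/pend_rcons_self|by rewrite en|by move=> s L; rewrite e3].
  have [ir [p ev H]] := (@iCR st g I c' rid R Hc').
  exists ir; split; [exact/hpo|by rewrite eh ?(pend_lt p)|].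
  move=> s L /H [H1 H2]; split => // sB; apply: Gx (H2 sB); exact: pend_lt p.
- move=> c' rid t v A /oth [[-> eX]|[ne Hc']]; first by case: (nXR rid t v A).
  have [ir [p ev H]] := (@iCRP st g I c' rid t v A Hc').
  exists ir; split; [exact/hpo|by rewrite eh ?(pend_lt p)|].
  move=> /wcl_rcons W jw c'' t' jwir; rewrite eh; last exact: ltn_trans jwir (pend_lt p).
  exact: H.
- move=> c' i /oth [[-> eX]|[ne Hc']]; first by case: nXI.
  move=> /(hpo _ _ ne) p; rewrite eh ?(pend_lt p) //; exact: (@iCI st g I c' i Hc' p).
- move=> i i' ii'; rewrite sh ltnS leq_eqVlt => /orP[/eqP ei'|i'n].
    subst i'.
    have iin : i < size (hist st) by subst.
    rewrite en eh // => nri _; rewrite ec => eci.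
    have [p [pp ip]] := last_pend iin eci.
    have rp := (@iCI st g I c p Hc pp).
    have ltip : i < p by rewrite ltn_neqAle ip andbT; apply/eqP => eip; move: nri; rewrite eip rp.
    apply/hasP; exists p; first by rewrite mem_iota; move: (pend_lt pp); lia.
    rewrite eh ?(pend_lt pp) // rp eh // eci; case: pp => _ e2 _; by rewrite e2 eqxx.
  rewrite done_before_rcons ?(ltnW i'n) // !eh // ?(ltn_trans ii' i'n) //.
  exact: (iHW I).
- move=> jw c' t'; rewrite sh ltnS leq_eqVlt => /orP[/eqP ->|jn].
    by rewrite en => ee; move: nre; rewrite ee.
  rewrite eh //; exact: (iI2 I).
- move=> /wcl_rcons W i j c' t v jw c'' t' ij; rewrite sh ltnS leq_eqVlt => /orP[/eqP ->|jn].
    by move=> _; rewrite en => ee; move: nre; rewrite ee.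
  have iin := ltn_trans ij jn.
  rewrite (eh i) // (eh j) // done_before_rcons ?(ltnW jn) // => e1 e2 e3 jwi.
  rewrite eh ?(ltn_trans jwi iin) //; exact: (iIH I W ij jn e1 e2 e3 jwi).
Qed.


Definition isRespW (e : Event V) := if e is ERespW _ _ then true else false.

Lemma max_resp (h : hseq) n : (exists jw c t, jw < n /\ evt h jw = ERespW c t) ->
  exists jm cm m, [/\ jm < n, evt h jm = ERespW cm m &
                    forall j c t, j < n -> evt h j = ERespW c t -> tle t m].
Proof.
elim: n => [[jw [c [t [//]]]]|n IH Hex].
have ext : forall m, (forall j c t, j < n -> evt h j = ERespW c t -> tle t m) ->
    ~~ isRespW (evt h n) -> forall j c t, j < n.+1 -> evt h j = ERespW c t -> tle t m.
  move=> m Hm nr j c t; rewrite ltnS leq_eqVlt => /orP[/eqP ->|jn]; last exact: Hm.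
  by move=> e; move: nr; rewrite e.
case E1: (evt h n) => [c0 v0'|cn tn|c0|c0 t0' v0'].
- have [jw [c [t [jwn ejw]]]] := Hex; have jn : jw < n.
    by move: jwn; rewrite ltnS leq_eqVlt => /orP[/eqP ej|//]; move: ejw; rewrite ej E1.
  have [jm [cm [m [a b d]]]] := IH (ex_intro _ jw (ex_intro _ c (ex_intro _ t (conj jn ejw)))).
  exists jm, cm, m; split => //; first exact: leqW.
  by apply: ext => //; rewrite E1.
- case: (boolP (has (fun j => isRespW (evt h j)) (iota 0 n))) => [/hasP[jw jwin r]|nh].
    have [c [t ejw]] : exists c t, evt h jw = ERespW c t.
      by move: r; case: (evt h jw) => // c t _; exists c, t.
    have jn : jw < n by move: jwin; rewrite mem_iota.
    have [jm [cm [m [a b d]]]] := IH (ex_intro _ jw (ex_intro _ c (ex_intro _ t (conj jn ejw)))).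
    case: (boolP (tle m tn)) => mt.
      exists n, cn, tn; split => // j c' t'; rewrite ltnS leq_eqVlt => /orP[/eqP ->|jn'].
        by rewrite E1 => -[_ <-]; exact: tle_refl.
      by move=> e; apply: tle_trans (d _ _ _ jn' e) mt.
    exists jm, cm, m; split => //; first exact: leqW.
    move=> j c' t'; rewrite ltnS leq_eqVlt => /orP[/eqP ->|jn']; last exact: d.
    by rewrite E1 => -[_ <-]; exact: ntle_le.
  exists n, cn, tn; split => // j c' t'; rewrite ltnS leq_eqVlt => /orP[/eqP ->|jn'].
    by rewrite E1 => -[_ <-]; exact: tle_refl.
  move=> e; exfalso; move: nh => /hasP; apply; exists j; first by rewrite mem_iota.
  by rewrite e.
- have [jw [c [t [jwn ejw]]]] := Hex; have jn : jw < n.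
    by move: jwn; rewrite ltnS leq_eqVlt => /orP[/eqP ej|//]; move: ejw; rewrite ej E1.
  have [jm [cm [m [a b d]]]] := IH (ex_intro _ jw (ex_intro _ c (ex_intro _ t (conj jn ejw)))).
  exists jm, cm, m; split => //; first exact: leqW.
  by apply: ext => //; rewrite E1.
- have [jw [c [t [jwn ejw]]]] := Hex; have jn : jw < n.
    by move: jwn; rewrite ltnS leq_eqVlt => /orP[/eqP ej|//]; move: ejw; rewrite ej E1.
  have [jm [cm [m [a b d]]]] := IH (ex_intro _ jw (ex_intro _ c (ex_intro _ t (conj jn ejw)))).
  exists jm, cm, m; split => //; first exact: leqW.
  by apply: ext => //; rewrite E1.
Qed.

Lemma count_inj (T I : eqType) (Q : I -> T -> Prop) (ts : seq T) (js : seq I) :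
  uniq ts -> (forall t, t \in ts -> exists2 i, i \in js & Q i t) ->
  (forall i t1 t2, Q i t1 -> Q i t2 -> t1 = t2) -> size ts <= size js.
Proof.
elim: ts js => [//|t ts IH] js /= /andP[tn u] H F.
have [i iin Qi] := H t (mem_head _ _).
have : size ts <= size (rem i js).
  apply: IH => // t' t'in.
  have [i' i'in Qi'] := H t' ltac:(by rewrite in_cons t'in orbT).
  exists i' => //; apply: rem_mem i'in; apply/eqP => ei; subst i'.
  by move: tn; rewrite (F _ _ _ Qi Qi') t'in.
rewrite size_rem // => Hs; have : 0 < size js by case: (js) iin.
lia.
Qed.

Lemma WT_fun (h : hseq) cls i t1 t2 : WT h cls i t1 -> WT h cls i t2 -> t1 = t2.
Proof.
move=> [v1 [e1 H1]] [v2 [e2 H2]].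
have ec : t1.2 = t2.2 by move: e1; rewrite e2 => -[].
case: H1 => [[j1 [a1 b1 c1 d1]]|[p1 [r1 [A1 C1]]]]; case: H2 => [[j2 [a2 b2 c2 d2]]|[p2 [r2 [A2 C2]]]].
- case: (ltngtP j1 j2) => [lt|lt|eq].
  + by move: (d2 j1 a1 lt); rewrite c1 /= ec eqxx.
  + by move: (d1 j2 a2 lt); rewrite c2 /= ec eqxx.
  + by move: c1; rewrite eq c2 => -[].
- by case: p2 => _ _ /(_ j1 a1 b1); rewrite c1 /= ec eqxx.
- by case: p1 => _ _ /(_ j2 a2 b2); rewrite c2 /= ec eqxx.
- by move: C1; rewrite ec C2 => -[].
Qed.


Lemma conc_contra st g c ir m (L : seq Ent) : Inv st g -> pend (hist st) c ir ->
  evt (hist st) ir = EInvR c -> write_concurrency_le delta (hist st) ->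
  (forall j c' t', j < ir -> evt (hist st) j = ERespW c' t' -> tle t' m) ->
  {subset L <= signed st} -> uniq (tags L) -> delta < size L ->
  all (fun x => ~~ tle (se_tag x) m) L -> False.
Proof.
move=> I p ev W mmax Lsub uL dL allL.
have irn := pend_lt p.
have := W ir irn ltac:(by rewrite ev); apply/negP; rewrite -ltnNge.
apply: leq_trans dL _; rewrite -(size_map (@se_tag E)) -size_filter.
apply: (@count_inj _ _ (fun i t => WT (hist st) (cl st) i t)) uL _ _; last first.
  by move=> i t1 t2; apply: WT_fun.
move=> tx /mapP[x xL ->].
have nt : ~~ tle (se_tag x) m := allP allL x xL.
case: (iS1 I (Lsub x xL)) => [e0|[iw Hw]]; first by move: nt; rewrite e0 tle_t0.
exists iw => //.
have Hw' := Hw; case: Hw' => [v [ei Hb]].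
have iwn : iw < size (hist st) by apply: evt_lt; rewrite ei.
rewrite mem_filter mem_iota /= iwn ei /= /concurrent /done_before andbT.
apply/andP; split; apply/negP; case/hasP => j jin /andP[rj /eqP cj]; move: jin; rewrite mem_iota => jr.
  rewrite ei /= in cj.
  case: Hb => [[j1 [a1 b1 c1 d1]]|[pp _]].
    have j1j : j1 <= j.
      rewrite leqNgt; apply/negP => jj1.
      by move: (d1 j ltac:(lia) jj1); rewrite cj eqxx.
    have := mmax j1 _ _ ltac:(lia) c1; by rewrite (negbTE nt).
  by case: pp => _ _ /(_ j ltac:(lia) ltac:(lia)); rewrite cj eqxx.
case: p => _ ec /(_ j ltac:(lia) ltac:(lia)); by rewrite cj ec eqxx.
Qed.

Lemma read_core st g c rid R t : Inv st g -> 3 * #|B| < #|S| - k ->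
  cl st c = RGet V rid R -> qsize S k <= nreplies R ->
  (forall t', k <= nlists_with R t' -> tle t' t) ->
  exists ir, [/\ pend (hist st) c ir, evt (hist st) ir = EInvR c &
    (write_concurrency_le delta (hist st) ->
     forall jw c' t', jw < ir -> evt (hist st) jw = ERespW c' t' -> tle t' t)].
Proof.
move=> I hb Hc hq Hmax.
have [ir [p ev HR]] := (@iCR st g I c rid R Hc).
exists ir; split => // W jw c' t' jwir ejw.
have [jm [cm [m [jmir ejm mmax]]]] :=
  @max_resp (hist st) ir (ex_intro _ jw (ex_intro _ c' (ex_intro _ t' (conj jwir ejw)))).
apply: tle_trans (mmax _ _ _ jwir ejw) _; apply: Hmax.
have jmn : jm < size (hist st) by apply: ltn_trans jmir (pend_lt p).
have [qX _] := (@iI2 st g I jm cm m jmn ejm).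
set X := g jm; set Y := [set s | isSome (R s)].
have Zsub : (X :&: Y) :\: B \subset
    [set s | if R s is Some L then m \in [seq se_tag x | x <- L] else false].
  apply/subsetP => s; rewrite !inE => /andP[sB /andP[sX sY]].
  case eR: (R s) sY => [L|//] _.
  have [Lsub G] := HR s L eR.
  have := G sB jm cm m jmir ejm sX; rewrite /Pk => /orP[//|/and3P[dL uL allL]].
  by case: (conc_contra I p ev W mmax Lsub uL dL allL).
apply: leq_trans (subset_leq_card Zsub).
have h1 := cardsUI X Y.
have h2 : #|X :|: Y| <= #|S| by apply: max_card.
have h3 := cardsID B (X :&: Y).
have h4 : #|(X :&: Y) :&: B| <= #|B| by apply: subset_leq_card; apply: subsetIr.
move: hq; rewrite /nreplies -/Y /qsize => hq.
move: qX; rewrite /qsize -/X => qX.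
clearbody X Y.
lia.
Qed.


Lemma inv_phase st g c (X0 X : CSt) (extra : seq Ent) (msgs : seq (NetMsg S E)) :
  Inv st g -> cl st c = X0 ->
  (forall rid t A, X0 <> WPut V E rid t A) ->
  X <> Idle S V E -> (forall rid v R, X <> WTag E rid v R) -> (forall rid R, X <> RGet V rid R) ->
  (forall rid t A, X = WPut V E rid t A -> [/\ rid = ctr st, A = set0 &
      exists iw v', pend (hist st) c iw /\ evt (hist st) iw = EInvW c v']) ->
  (forall rid t v A, X = RPut E rid t v A -> exists ir,
      [/\ pend (hist st) c ir, evt (hist st) ir = EInvR c &
          (write_concurrency_le delta (hist st) ->
           forall jw c' t', jw < ir -> evt (hist st) jw = ERespW c' t' -> tle t' t)]) ->
  (forall x, x \in extra -> se_tag x = t0 \/ exists iw, WT (hist st) (setcl (cl st) c X) iw (se_tag x)) ->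
  (forall y, List.In y msgs -> exists s x, [/\ y = ToServer c s (Put (ctr st) x), x \in extra &
      forall rid t A, X = WPut V E rid t A -> se_tag x = t]) ->
  Inv (mkState (lists st) (net st ++ msgs) (setcl (cl st) c X) (signed st ++ extra)
               (hist st) (ctr st).+1) g.
Proof.
move=> I Hc nW0 nXI nXW nXR XW XR Hex Hm.
have oth : forall c' Y, setcl (cl st) c X c' = Y -> (c' = c /\ X = Y) \/ (c' != c /\ cl st c' = Y).
  move=> c' Y; rewrite /setcl; case: (eqVneq c' c) => [->|ne]; by [left|right].
have subs : forall x, x \in signed st -> x \in signed st ++ extra.
  by move=> x xin; rewrite mem_cat xin.
constructor => /=.
- move=> s; have [a b d] := iLI I s; split => // x /d; exact: subs.
- move=> x; rewrite mem_cat => /orP[/(iS1 I)|/Hex //].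
  case=> [->|[iw H]]; [by left|right; exists iw].
  apply: WT_ext H _ (leqnn _) _ => // rid A Hcl p; left; exists rid, A; split => //.
  rewrite /setcl; case: (eqVneq (se_tag x).2 c) => [ex|//].
  by move: Hcl; rewrite ex Hc => /nW0.
- move=> y /List.in_app_iff[H|/Hm[s [x [-> _ _]]]] //=.
  exact: ltnW (@iF st g I y H).
- move=> c' s' rid x t A /List.in_app_iff[H|/Hm[s [x' [ey x'in Ht]]]].
    case/oth => [[ecc eX]|[ne Hc']].
      have [er _ _] := XW _ _ _ eX; subst c'.
      by move: (@iF st g I _ H); rewrite /= er ltnn.
    have [e1 e2] := (@iNPut st g I c' s' rid x t A H Hc'); split => //; exact: subs.
  case: ey => ec es er ex; subst c' s' rid x'.
  case/oth => [[_ eX]|[ne _]]; last by rewrite eqxx in ne.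
  by split; [exact: Ht eX|rewrite mem_cat x'in orbT].
- move=> s' c' rid t A s'B /List.in_app_iff[H|/Hm[s [x' [ey _ _]]]] //.
  case/oth => [[ecc eX]|[ne Hc']].
    have [er _ _] := XW _ _ _ eX; subst c'.
    by move: (@iF st g I _ H); rewrite /= er ltnn.
  exact: (@iNAck st g I s' c' rid t A s'B H Hc').
- move=> s' c' rid L s'B /List.in_app_iff[H|/Hm[s [x' [ey _ _]]]] //.
  have [H1 H2] := (@iNData st g I s' c' rid L s'B H); split.
    by move=> x /H1; exact: subs.
  move=> R ir; case/oth => [[_ eX]|[ne Hc']]; first by case: (nXR rid R).
  exact: H2 Hc'.
- move=> c' rid v R; case/oth => [[_ eX]|[ne Hc']]; first by case: (nXW rid v R).
  exact: (@iCW st g I c' rid v R Hc').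
- move=> c' rid t A; case/oth => [[-> eX]|[ne Hc']].
    have [_ eA H] := XW _ _ _ eX; split => // s; by rewrite eA inE.
  exact: (@iCWP st g I c' rid t A Hc').
- move=> c' rid R; case/oth => [[_ eX]|[ne Hc']]; first by case: (nXR rid R).
  have [ir [p ev H]] := (@iCR st g I c' rid R Hc'); exists ir; split => //.
  move=> s L /H [H1 H2]; split => // x /H1; exact: subs.
- move=> c' rid t v A; case/oth => [[-> eX]|[ne Hc']]; first exact: (XR _ _ _ _ eX).
  exact: (@iCRP st g I c' rid t v A Hc').
- move=> c' i; case/oth => [[_ eX]|[ne Hc']]; first by case: nXI.
  exact: (@iCI st g I c' i Hc').
- exact: iHW I.
- exact: iI2 I.
- exact: iIH I.
Qed.


Lemma inv_resp st g c (X0 : CSt) (e : Event V) rid t A :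
  Inv st g -> cl st c = X0 ->
  (X0 = WPut V E rid t A /\ e = ERespW c t /\ qsize S k <= #|A|) \/
  (exists v, X0 = RPut E rid t v A /\ e = ERespR c t v) ->
  Inv (mkState (lists st) (net st) (setcl (cl st) c (Idle S V E)) (signed st)
               (rcons (hist st) e) (ctr st))
      (fun j => if j == size (hist st) then A else g j).
Proof.
move=> I Hc HX.
set g' := fun j => _.
have ec : ev_client e = c by case: HX => [[_ [-> _]]|[v [_ ->]]].
have re : is_resp e by case: HX => [[_ [-> _]]|[v [_ ->]]].
have eh : forall j, j < size (hist st) -> evt (rcons (hist st) e) j = evt (hist st) j.
  by move=> j; apply: evt_rcons_lt.
have hpo : forall c' i, c' != c -> pend (rcons (hist st) e) c' i <-> pend (hist st) c' i.
  by move=> c' i ne; apply: pend_rcons_other; rewrite ec eq_sym.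
have en := evt_rcons_eq (hist st) e.
have sh : size (rcons (hist st) e) = (size (hist st)).+1 by rewrite size_rcons.
have eg : forall j, j < size (hist st) -> g' j = g j.
  by move=> j jn; rewrite /g' (ltn_eqF jn).
have oth : forall c' Y, setcl (cl st) c (Idle S V E) c' = Y ->
    (c' = c /\ Idle S V E = Y) \/ (c' != c /\ cl st c' = Y).
  move=> c' Y; rewrite /setcl; case: (eqVneq c' c) => [->|ne]; by [left|right].
have Gx : forall ir s L, ir < size (hist st) -> Good g (hist st) ir s L ->
    Good g' (rcons (hist st) e) ir s L.
  by move=> ir s L irn G; apply: Good_ext G (ltnW irn) eh eg.
constructor => /=.
- exact: iLI I.
- move=> x /(iS1 I)[->|[iw H]]; [by left|right; exists iw].
  apply: WT_ext H eh _ _; first by rewrite sh.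
  move=> rid' A' Hcl p.
  case: (eqVneq (se_tag x).2 c) => [ex|ne].
    right; split; last by rewrite sh.
    rewrite en; move: Hcl; rewrite ex Hc.
    by case: HX => [[-> [-> _]] [_ <- _]|[v [-> _]]].
  left; exists rid', A'; split; first by rewrite /setcl (negbTE ne).
  exact/hpo.
- exact: iF I.
- move=> c' s' rid' x t' A' H; case/oth => [[_ //]|[ne Hc']].
  exact: (@iNPut st g I c' s' rid' x t' A' H Hc').
- move=> s' c' rid' t' A' s'B H; case/oth => [[_ //]|[ne Hc']].
  exact: (@iNAck st g I s' c' rid' t' A' s'B H Hc').
- move=> s' c' rid' L s'B H; have [H1 H2] := (@iNData st g I s' c' rid' L s'B H); split => //.
  move=> R ir; case/oth => [[_ //]|[ne Hc']] /(hpo _ _ ne) p.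
  apply: Gx; [exact: pend_lt p|exact: H2 Hc' p].
- move=> c' rid' v R; case/oth => [[_ //]|[ne Hc']].
  have [iw [v' [p ev]]] := (@iCW st g I c' rid' v R Hc').
  by exists iw, v'; split; [apply/hpo|rewrite eh ?(pend_lt p)].
- move=> c' rid' t' A'; case/oth => [[_ //]|[ne Hc']].
  have [[iw [v' [p ev]]] H2] := (@iCWP st g I c' rid' t' A' Hc'); split => //.
  by exists iw, v'; split; [apply/hpo|rewrite eh ?(pend_lt p)].
- move=> c' rid' R; case/oth => [[_ //]|[ne Hc']].
  have [ir [p ev H]] := (@iCR st g I c' rid' R Hc').
  exists ir; split; [exact/hpo|by rewrite eh ?(pend_lt p)|].
  move=> s L /H [H1 H2]; split => // sB; apply: Gx (H2 sB); exact: pend_lt p.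
- move=> c' rid' t' v A'; case/oth => [[_ //]|[ne Hc']].
  have [ir [p ev H]] := (@iCRP st g I c' rid' t' v A' Hc').
  exists ir; split; [exact/hpo|by rewrite eh ?(pend_lt p)|].
  move=> /wcl_rcons W jw c'' t'' jwir; rewrite eh; last exact: ltn_trans jwir (pend_lt p).
  exact: H.
- move=> c' i; case/oth => [[-> _]|[ne Hc']].
    by move/(pend_rcons_self _ _ ec) => ->; rewrite en.
  move=> /(hpo _ _ ne) p; rewrite eh ?(pend_lt p) //; exact: (@iCI st g I c' i Hc' p).
- move=> i i' ii'; rewrite sh ltnS leq_eqVlt => /orP[/eqP ->|i'n].
    by rewrite en re.
  rewrite done_before_rcons ?(ltnW i'n) // !eh // ?(ltn_trans ii' i'n) //.
  exact: (iHW I).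
- move=> jw c' t'; rewrite sh ltnS leq_eqVlt => /orP[/eqP ->|jn].
    rewrite en /g' eqxx; case: HX => [[eX [ee hq]]|[v [_ ee]]]; rewrite ee //.
    case=> _ <-; split => //.
    have [_ P] := (@iCWP st g I c rid t A ltac:(by rewrite Hc eX)); exact: P.
  rewrite eh // eg //; exact: (iI2 I).
- move=> /wcl_rcons W i j c' t' v jw c'' t'' ij; rewrite sh ltnS leq_eqVlt => /orP[/eqP ej|jn].
    subst j; move=> ei; rewrite en => ee; rewrite done_before_rcons //.
    case: HX => [[_ [eE _]]|[v' [eX eE]]]; first by move: ee; rewrite eE.
    move: ee; rewrite eE => -[ecc <- _]; subst c'.
    have [ir [p ev H]] := (@iCRP st g I c rid t v' A ltac:(by rewrite Hc)).
    move=> nd jwi.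
    have iin : i < size (hist st) by [].
    rewrite (@evt_rcons_lt _ _ _ jw (ltn_trans jwi iin)) => ejw.
    rewrite (@evt_rcons_lt _ _ _ i iin) in ei.
    have eir : i = ir.
      case: (ltngtP i ir) => // [lt|lt].
        have := (iHW I lt (pend_lt p)); rewrite ei ev => /(_ isT isT erefl) db.
        move: nd; rewrite /done_before; move: db => /hasP[j0 j0in Hj0].
        case/negP; apply/hasP; exists j0; last by [].
        move: j0in; rewrite !mem_iota => /andP[a b]; apply/andP; split => //.
        move: (pend_lt p); lia.
      by case: p => _ _ /(_ i lt iin); rewrite ei eqxx.
    subst i; exact: H W jw c'' t'' jwi ejw.
  have iin := ltn_trans ij jn.
  rewrite (eh i) // (eh j) // done_before_rcons ?(ltnW jn) // => e1 e2 e3 jwi.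
  rewrite eh ?(ltn_trans jwi iin) //; exact: (iIH I W ij jn e1 e2 e3 jwi).
Qed.


Lemma reach_inv st : 3 * #|B| < #|S| - k -> 0 < k ->
  reachable B k delta enc dec v0 st -> exists g, Inv st g.
Proof.
move=> hb hk; elim=> [|st0 st1 _ [g I] Hs]; first by exists (fun _ => set0); exact: inv_init.
case: Hs I.
- move=> s0 c v Hc I; exists g.
  apply: (inv_inv (e := EInvW c v)) => //.
  + by move=> rid v' R _; exists v.
  + by move=> y /List.in_map_iff[s [<- _]]; split => //; exists c, s, (QTag E (ctr s0)).
- move=> s0 c Hc I; exists g.
  apply: (inv_inv (e := EInvR c)) => //.
  + by move=> rid R [<- <-].
  + by move=> y /List.in_map_iff[s [<- _]]; split => //; exists c, s, (QData E (ctr s0)).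
- move=> s0 n1 n2 c s m en sB I; exists g; exact: inv_delS.
- move=> s0 n1 n2 s c m en I; exists g; apply: inv_recv => //.
    move=> y; rewrite en => /List.in_app_iff[H|H]; apply/List.in_app_iff; [by left|by right; right].
  by move=> _; rewrite en; apply/List.in_app_iff; right; left.
- move=> s0 s c m sB I; exists g; apply: inv_recv => //; by rewrite sB.
- move=> s0 c rid v R Hc hq t I; exists g.
  have [iw [v' [p ev]]] := (@iCW s0 g I c rid v R Hc).
  apply: (@inv_phase s0 g c (WTag E rid v R) (WPut V E (ctr s0) t set0)
            (put_triples enc c t v) (put_msgs enc c (ctr s0) t v) I Hc) => //.
  + by move=> rid' t' A [<- _ <-]; split => //; exists iw, v'.
  + move=> x /mapP [s _ ->] /=; right; exists iw, v'; split => //.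
    by right; split => //; exists (ctr s0), set0; rewrite /setcl eqxx.
  + move=> y /List.in_map_iff [s [<- _]]; exists s, (t, frag enc v s, Some c); split => //.
      by apply/mapP; exists s; rewrite ?mem_enum.
    by move=> rid' t' A [_ <- _].
- move=> s0 c rid t A Hc hq I; eexists.
  exact: (@inv_resp s0 g c (WPut V E rid t A) (ERespW c t) rid t A I Hc
            (or_introl (conj erefl (conj erefl hq)))).
- move=> s0 c rid R t Hc hq hkt hmax v I; exists g.
  apply: (@inv_phase s0 g c (RGet V rid R) (RPut E (ctr s0) t v set0)
            (put_triples enc c t v) (put_msgs enc c (ctr s0) t v) I Hc) => //.
  + move=> rid' t' v' A [_ <- _ _]; exact: (read_core I hb Hc hq hmax).
  + move=> x /mapP [s _ ->] /=.
    have : 0 < nlists_with R t by apply: leq_trans hk hkt.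
    case/card_gt0P => s1; rewrite inE; case eR: (R s1) => [L|//] /mapP [y yL ety].
    have [ir [_ _ HR]] := (@iCR s0 g I c rid R Hc).
    have [Lsub _] := HR s1 L eR.
    case: (iS1 I (Lsub y yL)) => [e0|[iw H]]; [left; by rewrite ety|right; exists iw].
    rewrite ety; apply: WT_ext H _ (leqnn _) _ => // rid' A Hcl pp; left; exists rid', A.
    split => //; rewrite /setcl; case: (eqVneq (se_tag y).2 c) => [ex|//].
    by move: Hcl; rewrite ex Hc.
  + move=> y /List.in_map_iff [s [<- _]]; exists s, (t, frag enc v s, Some c); split => //.
    by apply/mapP; exists s; rewrite ?mem_enum.
- move=> s0 c rid t v A Hc hq I; eexists.
  exact: (@inv_resp s0 g c (RPut E rid t v A) (ERespR c t v) rid t A I Hc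
            (or_intror (ex_intro _ v (conj erefl erefl)))).
Qed.

End Main.


Theorem mainTheorem7 (S : finType) (B : {set S}) (b k delta : nat)
    (V E : eqType) (enc : V -> 'I_#|S| -> E) (dec : seq E -> V) (v0 : V)
    (hk : 0 < k) (hkn : k <= #|S|)
    (hcode : forall (v : V) (J : seq 'I_#|S|), uniq J -> k <= size J ->
               dec [seq enc v j | j <- J] = v)
    (hdelta : 1 <= delta)
    (hB : #|B| <= b) (hb : 3 * b < #|S| - k)
    (st : State S V E) (hreach : reachable B k delta enc dec v0 st)
    (hconc : write_concurrency_le delta (hist st))
    (iw jw ir jr cw cr : nat) (vw : V) (tw tr : Tag) (vr : V) :
  iw < jw -> jw < ir -> ir < jr -> jr < size (hist st) ->
  evt (hist st) iw = EInvW cw vw ->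
  evt (hist st) jw = ERespW cw tw -> ~~ done_before (hist st) iw jw ->
  evt (hist st) ir = EInvR cr ->
  evt (hist st) jr = ERespR cr tr vr -> ~~ done_before (hist st) ir jr ->
  tle tw tr.
Proof.
move=> _ jwir irjr jrn _ ejw _ eir ejr nd.
have hb' : 3 * #|B| < #|S| - k by lia.
have [g I] := reach_inv hb' hk hreach.
exact: (iIH I hconc irjr jrn eir ejr nd jwir ejw).
Qed.
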